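(* Fix $r\in(0,|\xi|_c)$ and let $\mathcal{S}=\{s>0:\alpha(r;s)<0\}$ (which is nonempty). For $s\in\mathcal{S}$ put $\lambda(r;s)=\sqrt{-\alpha(r;s)}>0$. Then there exists a unique $s\in\mathcal{S}$ such that $s=\lambda(r;s)$.
   Context: Fix $b,g>0$, $\rho_+>\rho_->0$, $\mu_\pm>0$, $\sigma_\pm\ge0$ (either both zero or both positive); $[\![\rho]\!]=\rho_+-\rho_-$. Let $\rho(x_3),\mu(x_3)$ equal $\rho_+,\mu_+$ on $(0,1)$ and $\rho_-,\mu_-$ on $(-b,0)$. $X=\{\psi\in H^2((-b,1)):\psi(-b)=\psi'(-b)=0\}$. For $r>0,s>0$: $E(\psi;r,s)=\frac12\int_{-b}^1s\mu(4r^2|\psi'|^2+|r^2\psi+\psi''|^2)dx_3+\frac12r^2(\sigma_+r^2+g\rho_+)|\psi(1)|^2+\frac12r^2(\sigma_-r^2-g[\![\rho]\!])|\psi(0)|^2$, $J(\psi;r)=\frac12\int_{-b}^1\rho(r^2|\psi|^2+|\psi'|^2)dx_3$, $\alpha(r;s)=\inf\{E(\psi;r,s):\psi\in X,\ J(\psi;r)=1\}$. $|\xi|_c=\sqrt{g[\![\rho]\!]/\sigma_-}$ if $\sigma_->0$, $|\xi|_c=\infty$ if $\sigma_-=0$. *)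

(* Defs.v *)
From HB Require Import structures.
From mathcomp Require Import all_boot all_order all_algebra.
From mathcomp Require Import all_classical all_reals all_analysis.
Set Implicit Arguments. Unset Strict Implicit. Unset Printing Implicit Defensive.
Import Order.TTheory GRing.Theory Num.Theory.
Import numFieldNormedType.Exports.
Local Open Scope classical_set_scope.
Local Open Scope ring_scope.

Section Defs.
Variable R : realType.

Local Notation leb := (@lebesgue_measure R).

Definition prim (f : R -> R) (a x : R) : R := Rintegral leb `[a, x] f.

Definition L2 (b : R) (f : R -> R) : Prop :=
  measurable_fun `[-b, 1] f /\
  leb.-integrable `[-b, 1] (fun x => ((f x) ^+ 2)%:E).

(* X = { psi in H^2((-b,1)) : psi(-b) = psi'(-b) = 0 } is parametrized by
   f = psi'' in L^2((-b,1)):  psi' = dpsi f,  psi = psi_of f. *)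
Definition dpsi (b : R) (f : R -> R) : R -> R := fun x => prim f (-b) x.
Definition psi_of (b : R) (f : R -> R) : R -> R := fun x => prim (dpsi b f) (-b) x.

(* piecewise constant coefficients: value p on (0,1), value m on (-b,0)
   (the value at the single point 0 is irrelevant for the integrals) *)
Definition pw (p m : R) (x : R) : R := if 0 < x then p else m.

Definition Efun (b g rp rm mp mm sp sm : R) (f : R -> R) (r s : R) : R :=
  let psi := psi_of b f in
  let psi' := dpsi b f in
  2^-1 * Rintegral leb `[-b, 1]
        (fun x => s * pw mp mm x *
                  (4 * r ^+ 2 * (psi' x) ^+ 2 + (r ^+ 2 * psi x + f x) ^+ 2))
  + 2^-1 * r ^+ 2 * (sp * r ^+ 2 + g * rp) * (psi 1) ^+ 2
  + 2^-1 * r ^+ 2 * (sm * r ^+ 2 - g * (rp - rm)) * (psi 0) ^+ 2.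

Definition Jfun (b rp rm : R) (f : R -> R) (r : R) : R :=
  let psi := psi_of b f in
  let psi' := dpsi b f in
  2^-1 * Rintegral leb `[-b, 1]
        (fun x => pw rp rm x * (r ^+ 2 * (psi x) ^+ 2 + (psi' x) ^+ 2)).

Definition alpha (b g rp rm mp mm sp sm : R) (r s : R) : R :=
  inf [set Efun b g rp rm mp mm sp sm f r s |
        f in [set f | L2 b f /\ Jfun b rp rm f r = 1]].

(* r in (0, |xi|_c), with |xi|_c = sqrt(g [[rho]] / sigma_-) if sigma_- > 0,
   and |xi|_c = +oo if sigma_- = 0 *)
Definition below_crit (g rp rm sm r : R) : Prop :=
  0 < r /\ (0 < sm -> r < Num.sqrt (g * (rp - rm) / sm)).

End Defs.

(* Main.v *)
Require Import Defs.
From HB Require Import structures.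
From mathcomp Require Import all_boot all_order all_algebra.
From mathcomp Require Import all_classical all_reals all_analysis.
From mathcomp Require Import measurable_realfun lebesgue_integral_differentiation.
From mathcomp Require Import ring lra.
Import Order.TTheory GRing.Theory Num.Theory.
Import numFieldNormedType.Exports.
Local Open Scope ring_scope.

Section Abs.
Local Open Scope classical_set_scope.
Variable R : realType.

Lemma abstract_fix (T : Type) (P : set T) (A B : T -> R) (al : R -> R) (C : R) :
  (forall s, 0 < s -> al s = inf [set s * A f + B f | f in P]) ->
  (forall f, P f -> 0 <= A f) -> (forall f, P f -> - C <= B f) ->
  (exists f, P f /\ B f < 0) ->
  exists! s, (0 < s /\ al s < 0) /\ s = Num.sqrt (- al s).
Proof.
move=> alE hA hB [f0 [Pf0 Bf0]].
have ne s : [set s * A f + B f | f in P] !=set0 by exists (s * A f0 + B f0), f0.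
have F1 s : 0 < s -> - C <= al s.
  move=> s0; rewrite alE //; apply: lb_le_inf => // _ [f Pf <-].
  have := hA f Pf; have := hB f Pf; nra.
have hlb s : 0 < s -> has_lbound [set s * A f + B f | f in P].
  move=> s0; exists (- C) => _ [f Pf <-]; have := hA f Pf; have := hB f Pf; nra.
have F2 s f : 0 < s -> P f -> al s <= s * A f + B f.
  move=> s0 Pf; rewrite alE //; apply: ge_inf; first exact: hlb.
  by exists f.
have F3 s x : 0 < s -> al s < x -> exists f, P f /\ s * A f + B f < x.
  move=> s0; rewrite alE // => /inf_lt [] // _ [f Pf <-] lt; by exists f.
have F4 s s' : 0 < s -> s <= s' -> al s <= al s'.
  move=> s0 ss'; rewrite (alE s') ?(lt_le_trans s0) //; apply: lb_le_inf => //.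
  move=> _ [f Pf <-]; apply: (le_trans (F2 s f s0 Pf)).
  have := hA f Pf; nra.
pose h s := s ^+ 2 + al s.
have hmono s s' : 0 < s -> s < s' -> h s < h s'.
  move=> s0 ss'; rewrite /h; have := F4 s s' s0 (ltW ss'); nra.
have C0 : 0 < C by have := hB f0 Pf0; lra.
pose S := [set s | 0 < s /\ h s < 0].
pose A0 := A f0; pose B0 := B f0.
have A0ge : 0 <= A0 by exact: hA.
have B0n : B0 < 0 by [].
have C0B : - C <= B0 by exact: hB.
pose s1 := - B0 / (2 * (A0 + 1 - B0)).
have s1pos : 0 < s1 by apply: divr_gt0; lra.
have s1S : S s1.
  split => //; rewrite /h.
  have den : 0 < 2 * (A0 + 1 - B0) by lra.
  have e1 : s1 * (2 * (A0 + 1 - B0)) = - B0 by rewrite /s1 mulfVK //; lra.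
  have : al s1 <= s1 * A0 + B0 by exact: F2.
  nra.
have Sub : forall s, S s -> s <= 1 + C.
  move=> s [s0 hs]; have := F1 s s0; rewrite /h in hs; nra.
have hsup : has_sup S by split; [exists s1 | exists (1 + C)].
pose s0 := sup S.
have s0ub : forall s, S s -> s <= s0 by move=> s Ss; exact: sup_upper_bound.
have s0pos : 0 < s0 by apply: (lt_le_trans s1pos); exact: s0ub.
have hs0 : h s0 = 0.
  case: (ltgtP (h s0) 0) => // hlt.
  - have [f [Pf Hf]] : exists f, P f /\ s0 * A f + B f < - s0 ^+ 2.
      by apply: F3 => //; rewrite /h in hlt; lra.
    have Af := hA f Pf.
    pose d := - (s0 ^+ 2 + s0 * A f + B f).
    have dpos : 0 < d by rewrite /d; lra.
    pose K := 2 * s0 + 1 + A f.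
    have Kpos : 0 < K by rewrite /K; lra.
    pose e := d / (2 * K + d).
    have epos : 0 < e by apply: divr_gt0; lra.
    have ee : e * (2 * K + d) = d by rewrite /e mulfVK //; lra.
    have e1 : e < 1 by nra.
    have eK : e * K < d by nra.
    have : S (s0 + e).
      split; first lra.
      have := F2 (s0 + e) f ltac:(lra) Pf; rewrite /h.
      rewrite /K /d in eK; nra.
    move/s0ub; lra.
  - pose dl := h s0.
    have dlpos : 0 < dl by [].
    pose K := 2 * s0 + 2 * C / s0.
    have Kpos : 0 < K by rewrite /K; apply: addr_gt0; [lra| apply: divr_gt0; lra].
    pose eps := Num.min (s0 / 2) (dl / (2 * K)).
    have epos : 0 < eps by rewrite lt_min; apply/andP; split; apply: divr_gt0; lra.
    have [s [s0' hs] lts] := sup_adherent epos hsup.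
    have sle : s <= s0 := s0ub s (conj s0' hs).
    have e1 : eps <= s0 / 2 by rewrite ge_min lexx.
    have e2 : eps <= dl / (2 * K) by rewrite ge_min lexx orbT.
    have e2' : eps * (2 * K) <= dl by rewrite -ler_pdivlMr //; lra.
    have [f [Pf Hf]] : exists f, P f /\ s * A f + B f < - s ^+ 2.
      by apply: F3 => //; rewrite /h in hs; lra.
    have Af := hA f Pf; have Bf := hB f Pf.
    have sA : s * A f <= C by nra.
    have lts2 : s0 - eps < s by [].
    have sge : s0 / 2 <= s by lra.
    have AC : A f <= 2 * C / s0.
      rewrite ler_pdivlMr //.
      have : s0 * A f <= 2 * (s * A f) by nra.
      lra.
    have := F2 s0 f s0pos Pf.
    have : (s0 - s) * (2 * s0 + A f) <= eps * K.
      rewrite /K; apply: ler_pM; try lra.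
    rewrite /dl /h in e2' hlt *.
    nra.
have Ss0 : al s0 = - s0 ^+ 2 by rewrite /h in hs0; lra.
exists s0; split.
  split; first by split => //; rewrite Ss0; nra.
  by rewrite Ss0 opprK sqrtr_sqr gtr0_norm.
move=> s [[spos sal] sE].
have hs : h s = 0.
  have : s ^+ 2 = - al s by rewrite {1}sE sqr_sqrtr //; lra.
  rewrite /h; lra.
case: (ltgtP s s0) => // lt.
- by have := hmono _ _ spos lt; lra.
- by have := hmono _ _ s0pos lt; lra.
Qed.
End Abs.

Section An.
Local Open Scope classical_set_scope.
Variable R : realType.
Local Notation leb := (@lebesgue_measure R).
Variable b : R.
Hypothesis hb : 0 < b.
Let D : set R := `[-b, 1].

Lemma mD : measurable D. Proof. exact: measurable_itv. Qed.

Lemma cont_meas (g : R -> R) : {within D, continuous g} -> measurable_fun D g.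
Proof. by move=> cg; apply: subspace_continuous_measurable_fun => //; exact: mD. Qed.

Lemma cont_int (g : R -> R) : {within D, continuous g} -> leb.-integrable D (EFin \o g).
Proof. by move=> cg; apply: continuous_compact_integrable => //; exact: segment_compact. Qed.

Lemma L2_int f : L2 b f -> leb.-integrable D (EFin \o f).
Proof.
move=> [mf i2].
apply: (@le_integrable _ _ _ leb D mD _ (EFin \o (fun x => 1 + f x ^+ 2))).
- exact/measurable_EFinP.
- move=> x Dx /=; rewrite lee_fin.
  rewrite [X in _ <= X]ger0_norm; last by have := sqr_ge0 (f x); lra.
  have H : `|f x| ^+ 2 = f x ^+ 2 by rewrite real_normK ?num_real.
  have := normr_ge0 (f x); nra.
- have -> : EFin \o (fun x => 1 + f x ^+ 2) =
    (EFin \o cst (1:R)) \+ (fun x => (f x ^+ 2)%:E).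
    by apply/funext => x; rewrite /= EFinD.
  apply: integrableD => //; first exact: mD.
  by apply: cont_int; apply: continuous_subspaceT => x; exact: cvg_cst.
Qed.


Lemma dpsi_cont f : leb.-integrable D (EFin \o f) ->
  {within D, continuous (dpsi b f)}.
Proof.
move=> fi; apply: (@parameterized_integral_continuous R (-b) 1 f) => //.
have h : -b <= (1:R) by have := hb; lra.
exact: h.
Qed.

Lemma psi_cont f : leb.-integrable D (EFin \o f) ->
  {within D, continuous (psi_of b f)}.
Proof.
move=> fi; apply: (@parameterized_integral_continuous R (-b) 1 (dpsi b f)).
  by have := hb; lra.
exact/cont_int/dpsi_cont.
Qed.


Lemma cint (A : set R) (a c : R) (g : R -> R) : A = `[a, c]%classic ->
  {within A, continuous g} -> leb.-integrable A (EFin \o g).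
Proof.
by move=> -> cg; apply: continuous_compact_integrable => //; exact: segment_compact.
Qed.

Lemma wM (A : set R) (g h : R -> R) : {within A, continuous g} ->
  {within A, continuous h} -> {within A, continuous (fun x => g x * h x)}.
Proof. by move=> cg ch x; exact: (continuousM (cg x) (ch x)). Qed.
Lemma wD (A : set R) (g h : R -> R) : {within A, continuous g} ->
  {within A, continuous h} -> {within A, continuous (fun x => g x + h x)}.
Proof. by move=> cg ch x; exact: (continuousD (cg x) (ch x)). Qed.
Lemma wC (A : set R) (c : R) : {within A, continuous (fun _ : R => c)}.
Proof. by move=> x; exact: cvg_cst. Qed.
Lemma wX (A : set R) (g : R -> R) : {within A, continuous g} ->
  {within A, continuous (fun x => g x ^+ 2)}.
Proof.
move=> cg; have -> : (fun x => g x ^+ 2) = (fun x => g x * g x).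
  by apply/funext => x; rewrite expr2.
exact: wM.
Qed.

Lemma psi0_bound f : leb.-integrable D (EFin \o f) ->
  (psi_of b f 0) ^+ 2 <= b * Rintegral leb D (fun x => (dpsi b f x) ^+ 2).
Proof.
move=> fi.
set g := dpsi b f.
pose D0 : set R := `[-b, 0]%classic.
have D0D : D0 `<=` D.
  move=> x; rewrite /D0 /D /= !in_itv /= => /andP[h1 h2]; apply/andP; split => //.
  lra.
have cg : {within D0, continuous g} by apply: continuous_subspaceW D0D _; exact: dpsi_cont.
have mD0 : measurable D0 by exact: measurable_itv.
have i1 : leb.-integrable D0 (EFin \o g) by exact: (@cint D0 (-b) 0 _ erefl).
have i2 : leb.-integrable D0 (EFin \o (fun x => g x ^+ 2)).
  by apply: (@cint D0 (-b) 0 _ erefl); exact: wX.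
have ic : forall c : R, leb.-integrable D0 (EFin \o (fun _ => c)).
  by move=> c; apply: (@cint D0 (-b) 0 _ erefl); exact: wC.
have mu0 : fine (leb D0) = b.
  rewrite /D0 lebesgue_measure_itv /= lte_fin.
  have -> : (- b < 0) = true by apply/idP; have := hb; lra.
  by rewrite /= sub0r opprK.
pose I := Rintegral leb D0 g.
pose Q := Rintegral leb D0 (fun x => g x ^+ 2).
have psi0 : psi_of b f 0 = I by [].
have key : forall m, 0 <= Q - 2 * m * I + m ^+ 2 * b.
  move=> m.
  have e : Rintegral leb D0 (fun x => (g x - m) ^+ 2) = Q - 2 * m * I + m ^+ 2 * b.
    have -> : Rintegral leb D0 (fun x => (g x - m) ^+ 2) =
      Rintegral leb D0 (fun x => g x ^+ 2 + ((- (2 * m)) * g x + m ^+ 2)).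
      by apply: eq_Rintegral => x _; ring.
    rewrite RintegralD //; last first.
      by apply: (@cint D0 (-b) 0 _ erefl); apply: wD; [apply: wM; [exact: wC|]|exact: wC].
    rewrite RintegralD //; last first.
      by apply: (@cint D0 (-b) 0 _ erefl); apply: wM; [exact: wC|].
    rewrite RintegralZl // Rintegral_cst // mu0 /Q /I; ring.
  rewrite -e; apply: Rintegral_ge0 => x _; exact: sqr_ge0.
have iD : leb.-integrable D (EFin \o (fun x => g x ^+ 2)).
  by apply: (@cint D (-b) 1 _ erefl); apply: wX; exact: dpsi_cont.
have QQ : Q <= Rintegral leb D (fun x => g x ^+ 2).
  rewrite /Q /Rintegral; apply: fine_le.
  - exact: integrable_fin_num.
  - apply: integrable_fin_num => //; exact: mD.
  - apply: ge0_subset_integral => //; first exact: mD.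
      by case/integrableP: iD.
    by move=> x _; rewrite lee_fin sqr_ge0.
pose t := I / b.
have tb : I = t * b by rewrite /t divfK //; have := hb; lra.
have k := key t.
have k2 : 0 <= Q - t ^+ 2 * b by rewrite tb in k; nra.
rewrite psi0 tb.
have bpos := hb.
have : t ^+ 2 * b * b <= Q * b by nra.
nra.
Qed.


Lemma pw_meas p m : measurable_fun D (pw p m).
Proof.
apply: (measurable_funS measurableT) => //.
apply: measurable_fun_ifT; last 2 first.
- exact: measurable_cst.
- exact: measurable_cst.
apply: measurable_fun_ltr; [exact: measurable_cst| exact: measurable_id].
Qed.

Lemma pw_int p m (h : R -> R) : 0 <= p -> 0 <= m -> {within D, continuous h} ->
  leb.-integrable D (EFin \o (fun x => pw p m x * h x)).
Proof.
move=> p0 m0 ch.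
apply: (@le_integrable _ _ _ leb D mD _ (EFin \o (fun x => (p + m) * h x))).
- apply/measurable_EFinP; apply: measurable_funM; first exact: pw_meas.
  exact: cont_meas.
- move=> x Dx /=; rewrite lee_fin !normrM (ger0_norm (_ : 0 <= p + m)); last lra.
  apply: ler_wpM2r => //; rewrite /pw; case: ifP => _; rewrite ger0_norm //; lra.
- by apply: (@cint D (-b) 1 _ erefl); apply: wM => //; exact: wC.
Qed.

Lemma RintZ_ge0 (h : R -> R) s : 0 < s -> measurable_fun D h ->
  (forall x, D x -> 0 <= h x) ->
  Rintegral leb D (fun x => s * h x) = s * Rintegral leb D h.
Proof.
move=> s0 mh h0; rewrite /Rintegral.
under eq_integral do rewrite EFinM.
rewrite ge0_integralZl_EFin //; try exact: mD;
  try (by move=> x Dx; rewrite lee_fin h0); try exact/measurable_EFinP;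
  try exact: ltW.
have : (0 <= \int[leb]_(x in D) (h x)%:E)%E by apply: integral_ge0 => x Dx; rewrite lee_fin h0.
case: (\int[leb]_(x in D) (h x)%:E)%E => [v _| _ |] //=.
by rewrite mulry gtr0_sg // mul1e /= mulr0.
Qed.


Lemma J_bound rp rm r f : 0 < rm -> rm < rp -> leb.-integrable D (EFin \o f) ->
  Rintegral leb D (fun x => dpsi b f x ^+ 2) <= 2 / rm * Jfun b rp rm f r.
Proof.
move=> rm0 rmp fi.
have cg := @dpsi_cont f fi; have cp := @psi_cont f fi.
have cH : {within D, continuous (fun x => r ^+ 2 * psi_of b f x ^+ 2 + dpsi b f x ^+ 2)}.
  by apply: wD; [apply: wM; [exact: wC| exact: wX]| exact: wX].
have iQ : leb.-integrable D (EFin \o (fun x => dpsi b f x ^+ 2)).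
  by apply: (@cint D (-b) 1 _ erefl); exact: wX.
have le : Rintegral leb D (fun x => rm * dpsi b f x ^+ 2) <=
    Rintegral leb D (fun x => pw rp rm x * (r ^+ 2 * psi_of b f x ^+ 2 + dpsi b f x ^+ 2)).
  apply: le_Rintegral; first exact: mD.
  - by apply: (@cint D (-b) 1 _ erefl); apply: wM; [exact: wC| exact: wX].
  - by apply: pw_int => //; lra.
  - move=> x Dx; have h1 := sqr_ge0 (psi_of b f x); have h2 := sqr_ge0 (dpsi b f x).
    have h3 : rm <= pw rp rm x by rewrite /pw; case: ifP => _; lra.
    have h4 := sqr_ge0 r.
    rewrite mulrDr.
    have e1 : rm * dpsi b f x ^+ 2 <= pw rp rm x * dpsi b f x ^+ 2 by apply: ler_wpM2r.
    have e2 : 0 <= pw rp rm x * (r ^+ 2 * psi_of b f x ^+ 2).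
      by apply: mulr_ge0; [lra| exact: mulr_ge0].
    lra.
rewrite RintegralZl // in le; last exact: mD.
rewrite /Jfun; set Q := Rintegral _ _ _ in le *; set J := Rintegral _ _ _ in le *.
have -> : 2 / rm * (2^-1 * J) = J / rm by field; apply/eqP; lra.
by rewrite ler_pdivlMr // mulrC.
Qed.


Definition Aof mp mm r f := 2^-1 * Rintegral leb D (fun x => pw mp mm x *
  (4 * r ^+ 2 * (dpsi b f x) ^+ 2 + (r ^+ 2 * psi_of b f x + f x) ^+ 2)).
Definition Bof g rp rm sp sm r f :=
  2^-1 * r ^+ 2 * (sp * r ^+ 2 + g * rp) * (psi_of b f 1) ^+ 2
  + 2^-1 * r ^+ 2 * (sm * r ^+ 2 - g * (rp - rm)) * (psi_of b f 0) ^+ 2.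

Lemma E_lin g rp rm mp mm sp sm r f s : 0 < mp -> 0 < mm -> L2 b f -> 0 < s ->
  Efun b g rp rm mp mm sp sm f r s = s * Aof mp mm r f + Bof g rp rm sp sm r f.
Proof.
move=> mp0 mm0 Lf s0.
have fi := @L2_int f Lf; have mf := Lf.1.
have cg := @dpsi_cont f fi; have cp := @psi_cont f fi.
rewrite /Efun /Aof /Bof.
have -> : Rintegral leb D (fun x => s * pw mp mm x *
     (4 * r ^+ 2 * dpsi b f x ^+ 2 + (r ^+ 2 * psi_of b f x + f x) ^+ 2)) =
   Rintegral leb D (fun x => s * (pw mp mm x *
     (4 * r ^+ 2 * dpsi b f x ^+ 2 + (r ^+ 2 * psi_of b f x + f x) ^+ 2))).
  by apply: eq_Rintegral => x _ /=; rewrite -mulrA.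
rewrite RintZ_ge0 //.
- ring.
- apply: measurable_funM; first exact: pw_meas.
  apply: measurable_funD.
    by apply: cont_meas; apply: wM; [exact: wC| exact: wX].
  apply: measurable_funX; apply: measurable_funD => //.
  by apply: cont_meas; apply: wM; [exact: wC| exact: cp].
- move=> x _; apply: mulr_ge0; first by rewrite /pw; case: ifP => _; lra.
  apply: addr_ge0; last exact: sqr_ge0.
  by apply: mulr_ge0; [apply: mulr_ge0; [lra| exact: sqr_ge0] | exact: sqr_ge0].
Qed.


Lemma ftc_poly (Q : {poly R}) x : Q.[-b] = 0 -> -b <= x ->
  Rintegral leb `[-b, x] (fun t => (Q^`()).[t]) = Q.[x].
Proof.
move=> Q0; rewrite le_eqVlt => /predU1P[<-|bx].
  by rewrite set_itv1 Rintegral_set1 Q0.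
rewrite /Rintegral (@continuous_FTC2 R (fun t => (Q^`()).[t]) (horner Q)) //.
- by rewrite Q0 /= subr0.
- by apply: continuous_subspaceT; exact: continuous_horner.
- split.
  + by move=> t _; exact: derivable_horner.
  + by apply: cvg_at_right_filter; exact: continuous_horner.
  + by apply: cvg_at_left_filter; exact: continuous_horner.
- by move=> t _; rewrite derivE.
Qed.


Definition p2 : {poly R} := ('X + b%:P) * (('X + b%:P) * (1 - 'X)).
Definition fk (k : R) : R -> R := horner ((k *: p2)^`()^`()).

Lemma p2_mb : p2.[-b] = 0.
Proof. by rewrite /p2 !(hornerM, hornerD, hornerX, hornerC, hornerN, hornerE) /=; ring. Qed.
Lemma p2_1 : p2.[1] = 0.
Proof. by rewrite /p2 !(hornerM, hornerD, hornerX, hornerC, hornerN, hornerE) /=; ring. Qed.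
Lemma p2_0 : p2.[0] = b ^+ 2.
Proof. by rewrite /p2 !(hornerM, hornerD, hornerX, hornerC, hornerN, hornerE) /=; ring. Qed.
Lemma dp2_mb : (p2^`()).[-b] = 0.
Proof. by rewrite /p2 derivM !(derivD, derivM, derivX, derivC) !(hornerM, hornerD, hornerX, hornerC, hornerN, hornerE) /=; ring. Qed.

Lemma dpsi_fk k x : -b <= x -> dpsi b (fk k) x = k * (p2^`()).[x].
Proof.
move=> bx; rewrite /dpsi /prim /fk ftc_poly //.
  by rewrite derivZ hornerZ.
by rewrite derivZ hornerZ dp2_mb mulr0.
Qed.

Lemma psi_fk k x : -b <= x -> psi_of b (fk k) x = k * p2.[x].
Proof.
move=> bx; rewrite /psi_of /prim.
rewrite (@eq_Rintegral _ _ _ leb _ (fun t => ((k *: p2)^`()).[t])); last first.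
  move=> t; rewrite inE /= in_itv /= => /andP[h1 _].
  by rewrite -/(dpsi b (fk k) t) dpsi_fk // derivZ hornerZ.
rewrite (@ftc_poly (k *: p2) x) ?hornerZ //.
by rewrite p2_mb mulr0.
Qed.


Lemma wH (A : set R) (q : {poly R}) : {within A, continuous (horner q)}.
Proof. by apply: continuous_subspaceT; exact: continuous_horner. Qed.

Lemma fk_L2 k : L2 b (fk k).
Proof.
split; first by apply: cont_meas; exact: wH.
by apply: (@cint D (-b) 1 _ erefl); apply: wX; exact: wH.
Qed.

Lemma Dge x : D x -> -b <= x.
Proof. by rewrite /D /= in_itv /= => /andP[]. Qed.

Lemma J_fk rp rm r k : 0 < rm -> rm < rp ->
  Jfun b rp rm (fk k) r = k ^+ 2 * Jfun b rp rm (fk 1) r.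
Proof.
move=> rm0 rmp.
pose H x := pw rp rm x * (r ^+ 2 * p2.[x] ^+ 2 + (p2^`()).[x] ^+ 2).
have e : forall k', Rintegral leb `[-b, 1] (fun x => pw rp rm x *
    (r ^+ 2 * psi_of b (fk k') x ^+ 2 + dpsi b (fk k') x ^+ 2)) =
    Rintegral leb D (fun x => k' ^+ 2 * H x).
  move=> k'; apply: eq_Rintegral => x; rewrite inE => /Dge bx.
  rewrite psi_fk // dpsi_fk // /H; ring.
rewrite /Jfun !e RintegralZl; last 2 first.
- exact: mD.
- apply: pw_int; [lra|lra|].
  by apply: wD; [apply: wM; [exact: wC| apply: wX; exact: wH] | apply: wX; exact: wH].
rewrite RintegralZl; last 2 first.
- exact: mD.
- apply: pw_int; [lra|lra|].
  by apply: wD; [apply: wM; [exact: wC| apply: wX; exact: wH] | apply: wX; exact: wH].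
ring.
Qed.

Lemma B_fk g rp rm sp sm r k :
  Bof g rp rm sp sm r (fk k) = 2^-1 * r ^+ 2 * (sm * r ^+ 2 - g * (rp - rm)) * (k * b ^+ 2) ^+ 2.
Proof.
rewrite /Bof psi_fk; last by have := hb; lra.
rewrite psi_fk; last by have := hb; lra.
rewrite p2_1 p2_0; ring.
Qed.


Lemma psi0_J rp rm r f : 0 < rm -> rm < rp -> leb.-integrable D (EFin \o f) ->
  (psi_of b f 0) ^+ 2 <= b * (2 / rm * Jfun b rp rm f r).
Proof.
move=> rm0 rmp fi.
apply: (le_trans (@psi0_bound f fi)); apply: ler_wpM2l; first by have := hb; lra.
exact: (@J_bound rp rm r f rm0 rmp fi).
Qed.

Lemma J1_pos rp rm r : 0 < rm -> rm < rp -> 0 < Jfun b rp rm (fk 1) r.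
Proof.
move=> rm0 rmp.
have := @psi0_J rp rm r (fk 1) rm0 rmp (@L2_int (fk 1) (fk_L2 1)).
rewrite psi_fk; last by have := hb; lra.
rewrite p2_0 mul1r.
have h : 0 < 2 / rm by apply: divr_gt0.
have bb := hb.
have b4 : 0 < (b ^+ 2) ^+ 2 by apply: exprn_gt0; apply: exprn_gt0.
set J := Jfun _ _ _ _ _.
move=> H.
rewrite ltNge; apply/negP => J0.
have : 2 / rm * J <= 0 by rewrite pmulr_rle0.
nra.
Qed.

End An.

Theorem lemma2p2 (R : realType) (b g rp rm mp mm sp sm r : R)
  (hb : 0 < b) (hg : 0 < g) (hrho : 0 < rm) (hrho' : rm < rp)
  (hmp : 0 < mp) (hmm : 0 < mm)
  (hsig : (sp = 0 /\ sm = 0) \/ (0 < sp /\ 0 < sm))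
  (hr : below_crit g rp rm sm r) :
  exists! s : R,
    (0 < s /\ alpha b g rp rm mp mm sp sm r s < 0) /\
    s = Num.sqrt (- alpha b g rp rm mp mm sp sm r s).
Proof.
have [r0 hr2] := hr.
have sp0 : 0 <= sp by case: hsig => [[-> _]|[h _]]; lra.
have sm0 : 0 <= sm by case: hsig => [[_ ->]|[_ h]]; lra.
have coef : sm * r ^+ 2 - g * (rp - rm) < 0.
  case: hsig => [[_ ->]|[_ smp]].
    rewrite mul0r sub0r oppr_lt0; apply: mulr_gt0 => //; lra.
  have := hr2 smp => rlt.
  have X0 : 0 <= g * (rp - rm) / sm by apply: divr_ge0; [apply: mulr_ge0; lra| lra].
  have : r ^+ 2 < g * (rp - rm) / sm.
    by rewrite -(sqr_sqrtr X0) (ltrXn2r _ (ltW r0) rlt).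
  rewrite ltr_pdivlMr // => h; rewrite mulrC in h; lra.
pose P : set (R -> R) := fun f => L2 b f /\ Jfun b rp rm f r = 1.
pose C := 2^-1 * r ^+ 2 * (g * (rp - rm)) * (b * (2 / rm)).
apply: (@abstract_fix R (R -> R) P (@Aof R b mp mm r) (@Bof R b g rp rm sp sm r)
          (alpha b g rp rm mp mm sp sm r) C).
- move=> s s0; rewrite /alpha; congr inf.
  apply/seteqP; split => _ [f Pf <-]; exists f => //.
    by rewrite (@E_lin R b hb) //; case: Pf.
  by rewrite (@E_lin R b hb) //; case: Pf.
- move=> f _; rewrite /Aof; apply: mulr_ge0; first lra.
  apply: Rintegral_ge0 => x _; apply: mulr_ge0; first by rewrite /pw; case: ifP => _; lra.
  apply: addr_ge0; last exact: sqr_ge0.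
  by apply: mulr_ge0; [apply: mulr_ge0; [lra| exact: sqr_ge0] | exact: sqr_ge0].
- move=> f [Lf Jf].
  have := @psi0_J R b hb rp rm r f hrho hrho' (@L2_int R b f Lf).
  rewrite Jf mulr1 => hpsi.
  rewrite /Bof /C.
  set p1 := psi_of b f 1; set p0 := psi_of b f 0.
  have t1 : 0 <= 2^-1 * r ^+ 2 * (sp * r ^+ 2 + g * rp) * p1 ^+ 2.
    apply: mulr_ge0; last exact: sqr_ge0.
    apply: mulr_ge0; first by apply: mulr_ge0; [lra| exact: sqr_ge0].
    apply: addr_ge0; [apply: mulr_ge0 => //; exact: sqr_ge0| apply: mulr_ge0; lra].
  have r2 : 0 <= 2^-1 * r ^+ 2 by apply: mulr_ge0; [lra| exact: sqr_ge0].
  have smr : 0 <= sm * r ^+ 2 by apply: mulr_ge0 => //; exact: sqr_ge0.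
  have g0 : 0 <= g * (rp - rm) by apply: mulr_ge0; lra.
  have q0 := sqr_ge0 p0.
  have e1 : - (g * (rp - rm)) * p0 ^+ 2 <= (sm * r ^+ 2 - g * (rp - rm)) * p0 ^+ 2.
    by apply: ler_wpM2r => //; lra.
  have e2 : - (g * (rp - rm)) * (b * (2 / rm)) <= - (g * (rp - rm)) * p0 ^+ 2.
    by rewrite !mulNr lerN2; apply: ler_wpM2l.
  have e3 := ler_wpM2l r2 (le_trans e2 e1).
  rewrite -!mulrA in e3 *; lra.
- have J1 := @J1_pos R b hb rp rm r hrho hrho'.
  pose k := (Num.sqrt (Jfun b rp rm (fk R b 1) r))^-1.
  have kpos : 0 < k by rewrite invr_gt0 sqrtr_gt0.
  exists (fk R b k); split.
    split; first exact: (@fk_L2 R b).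
    rewrite (@J_fk R b rp rm r k hrho hrho') /k exprVn sqr_sqrtr; last exact: ltW.
    by rewrite mulVf // gt_eqF.
  rewrite B_fk //.
  have : 0 < (k * b ^+ 2) ^+ 2 by apply: exprn_gt0; apply: mulr_gt0 => //; exact: exprn_gt0.
  have : 0 < 2^-1 * r ^+ 2 by apply: mulr_gt0; [lra| exact: exprn_gt0].
  move=> h1 h2.
  set A := 2^-1 * r ^+ 2; set X := (k * b ^+ 2) ^+ 2.
  have AX : 0 < A * X by apply: mulr_gt0.
  have -> : A * (sm * r ^+ 2 - g * (rp - rm)) * X = (sm * r ^+ 2 - g * (rp - rm)) * (A * X) by ring.
  nra.
Qed.
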